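(* Fix a company $i\in\mathcal C$ and suppose that every vehicle of company $i$ can reach at least one station, i.e. $\bigcup_{j\in\mathcal M}\mathcal F^i_j=\mathcal V_i$. Define $\overline{\mathcal K}_i\subseteq\mathcal P_{\mathcal M}$ as the set of all $x^i\in\mathcal P_{\mathcal M}$ such that for every proper subset $S\subsetneq\mathcal M$, $$N_i\sum_{j\in S}x^i_j\;\le\;\max\Big\{0,\ \Big|\bigcup_{j\in S}\mathcal F^i_j\Big|-|S|\Big\}.$$ If $\overline{\mathcal K}_i\neq\emptyset$, then every $x^i\in\overline{\mathcal K}_i$ is feasible, and $\overline{\mathcal K}_i$ is compact and convex.
   Context: Setting: $\mathcal M$ is a finite set of charging stations with $m=|\mathcal M|\ge 2$. Company $i$ owns a finite set $\mathcal V_i$ of vehicles with $N_i=|\mathcal V_i|\ge 1$. For each station $j\in\mathcal M$, $\mathcal F^i_j\subseteq\mathcal V_i$ is the set of vehicles of company $i$ that can reach station $j$. $\mathcal P_{\mathcal M}=\{x\in\mathbb R_{\ge 0}^{\mathcal M}:\sum_{j\in\mathcal M}x_j=1\}$. Rounding: given $x^i\in\mathcal P_{\mathcal M}$, a rounding of $x^i$ is an integer vector $n^i\in\mathbb Z_{\ge0}^{\mathcal M}$ with $n^i_j\in\{\lfloor N_ix^i_j\rfloor,\lceil N_ix^i_j\rceil\}$ for every $j$ and $\sum_{j\in\mathcal M}n^i_j=N_i$. A valid assignment for $n^i$ is a map $\phi:\mathcal V_i\to\mathcal M$ with $v\in\mathcal F^i_{\phi(v)}$ for all $v\in\mathcal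 V_i$ and $|\phi^{-1}(j)|=n^i_j$ for all $j\in\mathcal M$. The vector $x^i\in\mathcal P_{\mathcal M}$ is called feasible if every rounding of $x^i$ admits a valid assignment. *)

(* Defs.v *)
From HB Require Import structures.
From mathcomp Require Import all_boot all_order all_algebra.
From mathcomp Require Import all_classical all_reals all_analysis.
Set Implicit Arguments. Unset Strict Implicit. Unset Printing Implicit Defensive.
Import Order.TTheory GRing.Theory Num.Theory.
Local Open Scope ring_scope.

(* Stations are 'I_m; vehicles of the fixed company form the finType V,
   N = #|V|; F j : {set V} = vehicles that can reach station j.
   A vector of R^M is a row vector x : 'rV[R]_m, x_j = x ord0 j. *)

Definition simplex (R : realType) (m : nat) : set 'rV[R]_m :=
  [set x | (forall j, 0 <= x ord0 j) /\ \sum_(j < m) x ord0 j = 1].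

Definition is_rounding (R : realType) (m N : nat) (x : 'rV[R]_m)
    (n : 'I_m -> nat) : Prop :=
  (forall j, (n j)%:Z = Num.floor (N%:R * x ord0 j)
          \/ (n j)%:Z = Num.ceil (N%:R * x ord0 j))
  /\ (\sum_(j < m) n j)%N = N.

Definition valid_assignment (V : finType) (m : nat) (F : 'I_m -> {set V})
    (n : 'I_m -> nat) (phi : V -> 'I_m) : Prop :=
  (forall v, v \in F (phi v)) /\ (forall j, #|[set v | phi v == j]| = n j).

Definition feasible (R : realType) (V : finType) (m : nat)
    (F : 'I_m -> {set V}) (x : 'rV[R]_m) : Prop :=
  simplex x /\
  forall n, is_rounding #|V| x n -> exists phi, valid_assignment F n phi.

Definition Kbar (R : realType) (V : finType) (m : nat)
    (F : 'I_m -> {set V}) : set 'rV[R]_m :=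
  [set x | simplex x /\
     forall S : {set 'I_m}, (S != [set: 'I_m])%SET ->
       #|V|%:R * (\sum_(j in S) x ord0 j)
         <= Num.max 0 ((#|\bigcup_(j in S) F j|)%:R - (#|S|)%:R)].

(* Main.v *)
Require Import Defs.
From HB Require Import structures.
From mathcomp Require Import all_boot all_order all_algebra.
From mathcomp Require Import zify.
Set Implicit Arguments. Unset Strict Implicit. Unset Printing Implicit Defensive.

Section HallS.
Variables (V : finType) (m : nat) (n : 'I_m -> nat).

Definition nS (X : {set 'I_m}) := (\sum_(j in X) n j)%N.
Definition NA (A : V -> {set 'I_m}) (W : {set V}) := \bigcup_(v in W) A v.
Definition hall (A : V -> {set 'I_m}) := forall W : {set V}, #|W| <= nS (NA A W).

Lemma nS_sub (X Y : {set 'I_m}) : X \subset Y -> nS X <= nS Y.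
Proof.
move=> sXY; rewrite /nS [X in _ <= X](big_setID X) /=.
by rewrite (setIidPr sXY) leq_addr.
Qed.

Lemma nS_mod (X Y : {set 'I_m}) : nS X + nS Y = nS (X :|: Y) + nS (X :&: Y).
Proof.
rewrite /nS [X in X + _ = _](big_setID Y) /= [X in _ = X + _](big_setID Y) /=.
have -> : (X :|: Y) :&: Y = Y by apply/setP => j; rewrite !inE; case: (j \in X); case: (j \in Y).
have -> : (X :|: Y) :\: Y = X :\: Y by rewrite setDUl setDv setU0.
lia.
Qed.

Lemma NA_sub A (W W' : {set V}) : W \subset W' -> NA A W \subset NA A W'.
Proof.
move=> s; apply/subsetP => j /bigcupP [v vW jA]; apply/bigcupP; exists v => //.
exact: (subsetP s).
Qed.

Lemma hall_final A : hall A -> (forall v, #|A v| <= 1) -> (\sum_j n j)%N = #|V| ->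
  exists phi : V -> 'I_m, (forall v, phi v \in A v) /\
     (forall j, #|[set v | phi v == j]| = n j).
Proof.
move=> hA h1 hsum.
have ex : forall v, exists j, A v = [set j].
  move=> v; apply/cards1P; rewrite eqn_leq h1 /=.
  have := hA [set v]; rewrite /NA big_set1 cards1 => H.
  rewrite card_gt0; apply/set0Pn.
  case: (set_0Vmem (A v)) => [E|[j jA]]; last by exists j.
  by move: H; rewrite E /nS big_set0.
have [phi Hphi] := fin_all_exists ex.
exists phi; split; first by move=> v; rewrite Hphi set11.
have le : forall j, #|[set v | phi v == j]| <= n j.
  move=> j; apply: (leq_trans (hA _)).
  have : NA A [set v | phi v == j] \subset [set j].
    apply/subsetP => k /bigcupP [v]; rewrite inE => /eqP <-.
    by rewrite Hphi.
  move=> /nS_sub /leq_trans; apply.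
  by rewrite /nS big_set1.
have tot : (\sum_j #|[set v | phi v == j]|)%N = #|V|.
  transitivity (\sum_j \sum_v (phi v == j) : nat)%N.
    by apply: eq_bigr => j _; rewrite cardE -sum1_size big_filter big_mkcond /=;
       apply: eq_bigr => v _; rewrite inE; case: (phi v == j).
  rewrite exchange_big /= cardE -sum1_size big_enum /=.
  apply: eq_bigr => v _; rewrite (bigD1 (phi v)) //= eqxx big1 ?addn0 //.
  by move=> j /negbTE; rewrite eq_sym => ->.
have : (\sum_j (n j - #|[set v | phi v == j]|) == 0)%N.
  by rewrite sumnB // hsum tot subnn.
move=> /eqP/eqP; rewrite sum_nat_eq0 => /forallP H j.
apply/eqP; rewrite eqn_leq le /=.
by move: (H j) => /= /eqP /eqP; rewrite subn_eq0.
Qed.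


Definition del (A : V -> {set 'I_m}) v j := fun w => if w == v then A v :\ j else A w.

Lemma NA_del_notin A v j (W : {set V}) : v \notin W -> NA (del A v j) W = NA A W.
Proof.
move=> vW; apply: eq_bigr => w wW; rewrite /del.
by case: eqP => // E; move: vW; rewrite -E wW.
Qed.

Lemma NA_del_in A v j (W : {set V}) : v \in W -> NA (del A v j) W = NA A (W :\ v) :|: (A v :\ j).
Proof.
move=> vW; rewrite /NA (bigD1 v) //= /del eqxx setUC; congr (_ :|: _).
rewrite [RHS]big_mkcond /= [LHS]big_mkcond /=; apply: eq_bigr => w _.
by rewrite !inE andbC; case: eqP.
Qed.

Lemma NA_in (A : V -> {set 'I_m}) (W : {set V}) v : v \in W -> A v \subset NA A W.
Proof. by move=> vW; apply: bigcup_sup. Qed.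

Lemma hall_step (A : V -> {set 'I_m}) v j1 j2 : j1 \in A v -> j2 \in A v -> j1 != j2 -> hall A ->
  hall (del A v j1) \/ hall (del A v j2).
Proof.
move=> h1 h2 h12 hA.
case: (boolP [forall W : {set V}, #|W| <= nS (NA (del A v j1) W)]) => [/forallP H|].
  by left => W; apply: H.
move=> /forallPn [W1]; rewrite -ltnNge => lt1.
case: (boolP [forall W : {set V}, #|W| <= nS (NA (del A v j2) W)]) => [/forallP H|].
  by right => W; apply: H.
move=> /forallPn [W2]; rewrite -ltnNge => lt2.
exfalso.
have vW1 : v \in W1.
  apply/negPn/negP => vW; move: lt1; rewrite NA_del_notin //.
  by rewrite ltnNge hA.
have vW2 : v \in W2.
  apply/negPn/negP => vW; move: lt2; rewrite NA_del_notin //.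
  by rewrite ltnNge hA.
move: lt1 lt2; rewrite !NA_del_in //.
set X := _ :|: (A v :\ j1); set Y := _ :|: (A v :\ j2) => lt1 lt2.
have sU : NA A (W1 :|: W2) \subset X :|: Y.
  apply/subsetP => j /bigcupP [w]; rewrite inE => /orP wW jA.
  case: (eqVneq w v) => [E|ne].
    rewrite !inE; subst w; case: (eqVneq j j1) => [E|]; last by rewrite jA /= !orbT.
    by subst j; rewrite h12 h1 !orbT.
  case: wW => wW; rewrite !inE.
    by apply/orP; left; apply/orP; left; apply/bigcupP; exists w => //; rewrite !inE ne.
  by apply/orP; right; apply/orP; left; apply/bigcupP; exists w => //; rewrite !inE ne.
have sI : NA A ((W1 :&: W2) :\ v) \subset X :&: Y.
  apply/subsetP => j /bigcupP [w]; rewrite !inE => /and3P [ne wW1 wW2] jA.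
  apply/andP; split; apply/orP; left; apply/bigcupP; exists w => //;
  by rewrite !inE ne.
have hU := hA (W1 :|: W2); have hI := hA ((W1 :&: W2) :\ v).
have mU := nS_sub sU; have mI := nS_sub sI.
have md := nS_mod X Y.
have cUI := cardsUI W1 W2.
have cD := cardsD1 v (W1 :&: W2).
rewrite inE vW1 vW2 /= in cD.
lia.
Qed.

Lemma hall_main k (A : V -> {set 'I_m}) : (\sum_w #|A w| <= k)%N -> hall A -> (\sum_j n j)%N = #|V| ->
  exists phi : V -> 'I_m, (forall v, phi v \in A v) /\
     (forall j, #|[set v | phi v == j]| = n j).
Proof.
elim: k A => [|k IH] A hk hA hs.
  apply: hall_final => // v; idtac.
  by move: hk; rewrite leqn0 sum_nat_eq0 => /forallP /(_ v) /eqP ->.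
case: (boolP [forall v, #|A v| <= 1]) => [/forallP H|].
  exact: hall_final.
move=> /forallPn [v]; rewrite -ltnNge => /card_gt1P [j1 [j2 [h1 h2 h12]]].
have dec : forall j, j \in A v -> (\sum_w #|del A v j w| <= k)%N.
  move=> j hj; rewrite -ltnS; apply: leq_trans hk.
  rewrite (bigD1 v) //= [X in _ < X](bigD1 v) //= /del eqxx.
  have -> : (\sum_(i | i != v) #|(if i == v then A v :\ j else A i)| =
             \sum_(i | i != v) #|A i|)%N.
    by apply: eq_bigr => i /negbTE ->.
  rewrite ltn_add2r [X in _ < X](cardsD1 j) hj.
  by rewrite add1n ltnSn.
have sub : forall j w, del A v j w \subset A w.
  by move=> j w; rewrite /del; case: eqP => [->|_]; [apply: subD1set|].
case: (hall_step h1 h2 h12 hA) => hd.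
  have [phi [P1 P2]] := IH _ (dec _ h1) hd hs.
  by exists phi; split => // w; apply: (subsetP (sub j1 w)).
have [phi [P1 P2]] := IH _ (dec _ h2) hd hs.
by exists phi; split => // w; apply: (subsetP (sub j2 w)).
Qed.

End HallS.

From mathcomp Require Import all_classical all_reals all_analysis.
From mathcomp Require Import lra.
Import Order.TTheory GRing.Theory Num.Theory.
Import numFieldNormedType.Exports.

Local Open Scope ring_scope.
Local Open Scope classical_set_scope.

Section Main.
Variables (R : realType) (m : nat) (V : finType) (F : 'I_m -> {set V}).

Definition Aof (v : V) : {set 'I_m} := [set j | v \in F j].

Lemma station_hall (n : 'I_m -> nat) :
  (forall S : {set 'I_m}, (nS n S <= #|(\bigcup_(j in S) F j)%SET|)%N) ->
  (\sum_j n j)%N = #|V| -> hall n Aof.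
Proof.
move=> hS hs W.
set X := NA Aof W.
have tot : (nS n X + nS n (~: X))%N = #|V|.
  rewrite nS_mod finset.setUCr finset.setICr /nS big_set0 addn0 -hs.
  by apply: eq_bigl => j; rewrite finset.in_setT.
have sub : (\bigcup_(j in ~: X) F j)%SET \subset ~: W.
  apply/fintype.subsetP => v /finset.bigcupP [j]; rewrite !inE => jX vF.
  apply/negP => vW; move/negP: jX; apply; apply/finset.bigcupP; exists v => //.
  by rewrite inE.
have := hS (~: X); have := subset_leq_card sub; have := cardsC W.
rewrite cardsE; lia.
Qed.

Lemma station_cond (x : 'rV[R]_m) (n : 'I_m -> nat) :
  (0 < #|V|)%N -> Kbar F x -> is_rounding #|V| x n -> (\bigcup_(j < m) F j = [set: V])%SET ->
  forall S : {set 'I_m}, (nS n S <= #|(\bigcup_(j in S) F j)%SET|)%N.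
Proof.
move=> Vpos [[x0 x1] hK] [hr hs] hU S.
have N0 : (0 : R) <= #|V|%:R by rewrite ler0n.
case: (eqVneq S [set: 'I_m]%SET) => [->|nT].
  have -> : (\bigcup_(j in [set: 'I_m]%SET) F j)%SET = [set: V]%SET.
    by rewrite -hU; apply: eq_bigl => j; rewrite finset.in_setT.
  rewrite cardsT /nS -hs; apply: eq_leq; apply: eq_bigl => j; rewrite finset.in_setT.
  by [].
have hKS := hK S nT.
set c := (#|(\bigcup_(j in S) F j)%SET|%:R - #|S|%:R : R) in hKS.
rewrite -(ler_nat R) /nS natr_sum.
have nle : forall j, (n j)%:R <= #|V|%:R * x ord0 j + 1 :> R.
  move=> j; have -> : (n j)%:R = ((n j)%:Z)%:~R :> R by [].
  case: (hr j) => ->.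
    by have := floor_le (#|V|%:R * x ord0 j); lra.
  by have := ceilB1_lt (#|V|%:R * x ord0 j); rewrite intrB /=; lra.
case: (lerP c 0) => hc.
  rewrite (max_l hc) in hKS.
  have Vp : (0 : R) < #|V|%:R by rewrite ltr0n.
  rewrite pmulr_rle0 // in hKS.
  have s0 : \sum_(j in S) x ord0 j = 0.
    by apply/eqP; rewrite eq_le hKS sumr_ge0.
  have xj := psumr_eq0P (fun j _ => x0 j) s0.
  rewrite big1 ?ler0n // => j jS.
  case: (hr j); rewrite xj // mulr0 ?floor0 ?ceil0 => /eqP; rewrite -[0]/(0%:Z) eqz_nat => /eqP ->;
  by [].
rewrite (max_r (ltW hc)) in hKS.
apply: (le_trans (ler_sum _ (fun j _ => nle j))).
rewrite big_split /= -mulr_sumr sumr_const /c in hKS *.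
have -> : (1 : R) *+ #|S| = #|S|%:R by [].
lra.
Qed.

Lemma cont_big (g : 'I_m -> 'rV[R]_m -> R) (s : seq 'I_m) (P : pred 'I_m) :
  (forall j, continuous (g j)) -> continuous (fun x => \sum_(j <- s | P j) g j x).
Proof.
move=> hg; elim: s => [|j s IH].
  rewrite (_ : (fun x => _) = (fun _ => 0)); first exact: cst_continuous.
  by apply: funext => x; rewrite big_nil.
case: (boolP (P j)) => Pj.
  rewrite (_ : (fun x => _) = (fun x => g j x + \sum_(j <- s | P j) g j x)).
    by move=> x; exact: (continuousD (hg j x) (IH x)).
  by apply: funext => x; rewrite big_cons Pj.
rewrite (_ : (fun x => _) = (fun x => \sum_(j <- s | P j) g j x)) //.
by apply: funext => x; rewrite big_cons (negbTE Pj).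
Qed.

Lemma closed_Kbar : closed (@Kbar R V m F).
Proof.
have -> : @Kbar R V m F = (\bigcap_(j in setT) [set x : 'rV[R]_m | 0 <= x ord0 j])
    `&` [set x | \sum_(j < m) x ord0 j = 1]
    `&` \bigcap_(S in [set S : {set 'I_m} | S != [set: 'I_m]%SET])
          [set x | #|V|%:R * (\sum_(j in S) x ord0 j)
             <= Num.max 0 (#|(\bigcup_(j in S) F j)%SET|%:R - #|S|%:R)].
  apply/seteqP; split => x /=.
    move=> [[x0 x1] hK]; split; first split.
    - by move=> j _; exact: x0.
    - exact: x1.
    - by move=> S hS; exact: hK.
  move=> [[x0 x1] hK]; split; first split.
  - by move=> j; exact: (x0 j I).
  - exact: x1.
  - by move=> S hS; exact: hK.
apply: closedI; [apply: closedI|].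
- apply: closed_bigI => j _.
  apply: (@preimage_closed _ _ (fun x : 'rV[R]_m => x ord0 j) [set y : R | 0 <= y]).
    by move=> ? _; exact: coord_continuous.
  exact: closed_ge.
- apply: (@preimage_closed _ _ (fun x : 'rV[R]_m => \sum_(j < m) x ord0 j) [set y : R | y = 1]).
    by move=> ? _; apply: cont_big => j; exact: coord_continuous.
  exact: closed_eq.
- apply: closed_bigI => S _.
  apply: (@preimage_closed _ _ (fun x : 'rV[R]_m => #|V|%:R * \sum_(j in S) x ord0 j)
     [set y : R | y <= Num.max 0 (#|(\bigcup_(j in S) F j)%SET|%:R - #|S|%:R)]).
    move=> x _.
    have hc : continuous (fun x : 'rV[R]_m => \sum_(j in S) x ord0 j).
      by apply: cont_big => j; exact: coord_continuous.
    exact: (continuousM (@cst_continuous _ _ (#|V|%:R : R) x) (hc x)).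
  exact: closed_le.
Qed.

Lemma Kbar_sub01 : @Kbar R V m F `<=` [set v : 'rV[R]_m | forall i, `[(0:R), 1]%classic (v ord0 i)].
Proof.
move=> x [[x0 x1] _] i /=; rewrite in_itv /= x0 /= -x1.
rewrite (bigD1 i) //= lerDl sumr_ge0 // => j _; exact: x0.
Qed.

Lemma Kbar_convex (x y : 'rV[R]_m) (t : R) : Kbar F x -> Kbar F y -> 0 <= t -> t <= 1 ->
     Kbar F (t *: x + (1 - t) *: y).
Proof.
move=> [[x0 x1] hx] [[y0 y1] hy] t0 t1.
have E : forall j, (t *: x + (1 - t) *: y) ord0 j = t * x ord0 j + (1 - t) * y ord0 j.
  by move=> j; rewrite !mxE.
split; [split|].
- move=> j; rewrite !mxE; apply: addr_ge0; apply: mulr_ge0 => //; lra.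
- under eq_bigr do rewrite !mxE.
  rewrite big_split /= -!mulr_sumr x1 y1; lra.
move=> S hS; rewrite (eq_bigr (fun j => t * x ord0 j + (1 - t) * y ord0 j)); last by move=> j _; rewrite !mxE.
rewrite big_split /= -!mulr_sumr.
have := hx S hS; have := hy S hS.
set c := Num.max _ _; set a := \sum_(j in S) x ord0 j; set b := \sum_(j in S) y ord0 j.
move=> hb ha.
have h1 : t * (#|V|%:R * a) <= t * c by apply: ler_wpM2l.
have h2 : (1 - t) * (#|V|%:R * b) <= (1 - t) * c by apply: ler_wpM2l => //; lra.
rewrite mulrDr; lra.
Qed.

End Main.
Theorem proposition1 (R : realType) (m : nat) (V : finType)
    (F : 'I_m -> {set V}) :
  (2 <= m)%N -> (0 < #|V|)%N ->
  (\bigcup_(j < m) F j = [set: V])%SET ->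
  (@Kbar R V m F) !=set0 ->
  (forall x, (@Kbar R V m F) x -> feasible F x) /\
  compact (@Kbar R V m F : set 'rV[R]_m) /\
  (forall x y (t : R), (@Kbar R V m F) x -> (@Kbar R V m F) y -> 0 <= t -> t <= 1 ->
     (@Kbar R V m F) (t *: x + (1 - t) *: y)).
Proof.
move=> m2 Vpos hU _; split; [|split].
- move=> x hx; split; first by case: hx.
  move=> n hn.
  have hs := hn.2.
  have hh := station_hall (station_cond Vpos hx hn hU) hs.
  have [phi [P1 P2]] := hall_main (leqnn _) hh hs.
  by exists phi; split => // v; move: (P1 v); rewrite inE.
- apply: (@subclosed_compact _ _ [set v : 'rV[R]_m | forall i, `[(0:R), 1]%classic (v ord0 i)]).
  + exact: closed_Kbar.
  + have := (@rV_compact _ m (fun _ => `[(0:R), 1]%classic) (fun _ => @segment_compact R 0 1)).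
    by [].
  + exact: Kbar_sub01.
- exact: Kbar_convex.
Qed.
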